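(* Let $N$ be a binary orchard network and let $N'$ be the directed graph obtained from $N$ by an rSPR move. If $N'$ admits an HGT-consistent labelling (in the sense for directed graphs given below), then $N'$ is a network; that is, the rSPR move is valid.
   Context: A (directed phylogenetic) network on a finite taxa set $X$ is a directed acyclic graph without parallel arcs whose nodes are of the following types: a unique root (indegree 0, outdegree 1); tree nodes (indegree 1, outdegree at least 2); reticulations (indegree at least 2, outdegree 1); leaves (indegree 1, outdegree 0), the leaves being bijectively labelled by $X$. A network is binary if every tree node and every reticulation has total degree exactly 3. A tree is a network without reticulations. Orchard networks: An ordered pair of leaves $(x,y)$ is a cherry if $x$ and $y$ have a common parent; it is a reticulated cherry if the parent $p_x$ of $x$ is a reticulation and $p_x$ and $y$ have a common parent. Let $p_x,p_y$ be the parents of $x,y$. Reducing $(x,y)$ in a network $N$: if $(x,y)$ is a cherry, delete $x$ and suppress $p_x$ if it now has indegree 1 and outdegree 1; if $(x,y)$ is a reticulated cherry, delete the arc $(p_y,p_x)$ and suppress any resulting node of indegree 1 and outdegree 1; otherwise do nothing. (Suppressing a node $v$ with one parent $u$ and one child $w$ means deleting $v$ and adding the arc $(u,w)$.) $N$ is orchard if some sequence of such reductions turns $N$ into a tree with exactly one leaf. rSPR move: Let $N$ be a binary network with an arc $(z,w)$ and an arc $e$ with endpoints $x$ and $y$ (either $e=(x,y)$ or $e=(y,x)$), and let $p$ and $c$ be, respectively, the parent and the child of $x$ other than $y$. The rSPR move $(p,x,c)\xrightarrow{e}(z,w)$ replaces the arcs $(p,x)$, $(x,c)$, $(z,w)$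 by the arcs $(p,c)$, $(z,x)$, $(x,w)$. The move is valid if the resulting directed graph is a network. HGT-consistent labelling of a directed graph: Let $D=(V,A)$ be a directed graph, possibly with parallel arcs, in which every node has indegree and outdegree at most 2 and total degree at most 3. An HGT-consistent labelling of $D$ is a map $t:V\to\mathbb{R}$ such that (1) for every arc $(u,v)$, $t(u)\le t(v)$, and equality is allowed only if $v$ has indegree 2; (2) every node $u$ with at least one child has a child $v$ with $t(u)<t(v)$; (3) for every node $r$ with two parents $u$ and $v$, exactly one of $t(u)=t(r)$ and $t(v)=t(r)$ holds. *)

(* Defs.v *)
From Stdlib Require Import Reals.
From mathcomp Require Import all_boot.
Set Implicit Arguments. Unset Strict Implicit. Unset Printing Implicit Defensive.

Section Graphs.
Variable T : finType.

(* A directed (multi)graph: a finite node set and a list of arcs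
   (a list, so that parallel arcs can be represented). *)
Record graph := Graph { gV : {set T}; gA : seq (T * T) }.

Definition indeg (G : graph) (v : T) : nat := count (fun a => a.2 == v) (gA G).
Definition outdeg (G : graph) (v : T) : nat := count (fun a => a.1 == v) (gA G).
Definition parents (G : graph) (v : T) : seq T := [seq a.1 | a <- gA G & a.2 == v].
Definition children (G : graph) (v : T) : seq T := [seq a.2 | a <- gA G & a.1 == v].
Definition arcrel (G : graph) : rel T := fun u v => (u, v) \in gA G.

Definition is_root (G : graph) v := (indeg G v == 0) && (outdeg G v == 1).
Definition is_tree_node (G : graph) v := (indeg G v == 1) && (1 < outdeg G v).
Definition is_retic (G : graph) v := (1 < indeg G v) && (outdeg G v == 1).
Definition is_leaf (G : graph) v := (v \in gV G) && (indeg G v == 1) && (outdeg G v == 0).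

Definition leaf_set (G : graph) : {set T} := [set v in gV G | is_leaf G v].

Definition is_network (G : graph) : Prop :=
  [/\ all (fun a => (a.1 \in gV G) && (a.2 \in gV G)) (gA G),
      uniq (gA G),
      (forall u v, (u, v) \in gA G -> ~~ connect (arcrel G) v u),
      #|[set v in gV G | indeg G v == 0]| = 1 &
      (forall v, v \in gV G ->
         [|| is_root G v, is_tree_node G v, is_retic G v | is_leaf G v])].

(* network on the taxa set X (leaves identified with their labels) *)
Definition network_on (X : {set T}) (G : graph) : Prop :=
  is_network G /\ leaf_set G = X.

Definition is_binary_network (G : graph) : Prop :=
  is_network G /\
  (forall v, v \in gV G ->
     (is_tree_node G v -> outdeg G v = 2) /\ (is_retic G v -> indeg G v = 2)).

Definition is_tree (G : graph) : Prop :=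
  is_network G /\ (forall v, v \in gV G -> ~~ is_retic G v).

Definition parent_of (G : graph) (v : T) : T := head v (parents G v).
Definition child_of (G : graph) (v : T) : T := head v (children G v).

Definition suppress (G : graph) (v : T) : graph :=
  if (v \in gV G) && (indeg G v == 1) && (outdeg G v == 1) then
    Graph (gV G :\ v)
          ((parent_of G v, child_of G v)
             :: [seq a <- gA G | (a.1 != v) && (a.2 != v)])
  else G.

Definition delete_node (G : graph) (x : T) : graph :=
  Graph (gV G :\ x) [seq a <- gA G | (a.1 != x) && (a.2 != x)].

Definition is_cherry (G : graph) (x y : T) : bool :=
  [&& is_leaf G x, is_leaf G y, x != y & parent_of G x == parent_of G y].

Definition is_ret_cherry (G : graph) (x y : T) : bool :=
  [&& is_leaf G x, is_leaf G y, is_retic G (parent_of G x)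
    & (parent_of G y, parent_of G x) \in gA G].

Definition reduce (G : graph) (xy : T * T) : graph :=
  let: (x, y) := xy in
  let px := parent_of G x in
  let py := parent_of G y in
  if is_cherry G x y then suppress (delete_node G x) px
  else if is_ret_cherry G x y then
    suppress (suppress (Graph (gV G) (rem (py, px) (gA G))) px) py
  else G.

Definition orchard (G : graph) : Prop :=
  exists s : seq (T * T),
    is_tree (foldl reduce G s) /\ #|leaf_set (foldl reduce G s)| = 1.

Definition rSPR (G : graph) (p x c z w : T) : graph :=
  Graph (gV G)
        ([:: (p, c); (z, x); (x, w)] ++ rem (z, w) (rem (x, c) (rem (p, x) (gA G)))).

Definition HGT_consistent (D : graph) (t : T -> R) : Prop :=
  [/\ (forall v, v \in gV D ->
         indeg D v <= 2 /\ outdeg D v <= 2 /\ indeg D v + outdeg D v <= 3),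
      (forall u v, (u, v) \in gA D ->
         Rle (t u) (t v) /\ (t u = t v -> indeg D v = 2)),
      (forall u, u \in gV D -> 0 < outdeg D u ->
         exists v, (u, v) \in gA D /\ Rlt (t u) (t v)) &
      (forall r u v, r \in gV D -> parents D r = [:: u; v] ->
         (t u = t r <-> ~ (t v = t r)))].

End Graphs.

(* Main.v *)
Require Import Defs.
From Stdlib Require Import Reals.
From mathcomp Require Import all_boot.
From mathcomp Require Import zify.
From Stdlib Require Import Lia.

Lemma count_rem_ (A : eqType) (P : pred A) a s :
  a \in s -> count P s = P a + count P (rem a s).
Proof. by move=> h; rewrite ((permP (perm_to_rem h)) P). Qed.
Arguments count_rem_ {A} P {a s}.

Lemma mem_rem_neq (A : eqType) (a b : A) s :
  b != a -> b \in s -> b \in rem a s.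
Proof.
move=> ne; elim: s => [|h t IH] //= hb.
case: (h =P a) => [eha|_].
  by subst h; move: hb; rewrite in_cons (negbTE ne).
move: hb; rewrite !in_cons => /orP [->|/IH ->] //; by rewrite orbT.

Qed.

Lemma count2 (A : eqType) (P : pred A) a b s :
  a \in s -> b \in s -> a != b -> P a -> P b -> 1 < count P s.
Proof.
move=> ha hb ne Pa Pb.
rewrite (count_rem_ P ha) Pa.
have hb' : b \in rem a s by apply: mem_rem_neq => //; rewrite eq_sym.
rewrite (count_rem_ P hb') Pb.
by [].
Qed.
Arguments count2 {A} P {a b s}.

Lemma not_uniq_dup (A : eqType) (s : seq A) :
  ~~ uniq s -> exists a, 1 < count (pred1 a) s.
Proof.
elim: s => [|h t IH] //=.
rewrite negb_and negbK => /orP [ht|/IH [a ha]].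
  exists h; rewrite eqxx /=.
  have : 0 < count (pred1 h) t by rewrite -has_count; apply/hasP; exists h => //=.
  by [].
exists a; case: (h == a) => //=; lia.
Qed.

Section G.
Variable T : finType.

Lemma connect_le (D : graph T) (t : T -> R) :
  (forall u v, (u, v) \in gA D -> Rle (t u) (t v)) ->
  forall a b, connect (arcrel D) a b -> Rle (t a) (t b).
Proof.
move=> hm a b /connectP [q hq ->]; elim: q a hq => [|s q IH] a /=.
  by move=> _; apply: Rle_refl.
case/andP => hs hp; apply: Rle_trans (IH _ hp); exact: hm.
Qed.

Definition endpts (D : graph T) :=
  all (fun a => (a.1 \in gV D) && (a.2 \in gV D)) (gA D).

Lemma hgt_acyc (D : graph T) t : endpts D -> HGT_consistent D t ->
  forall u v, (u, v) \in gA D -> ~~ connect (arcrel D) v u.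
Proof.
move=> hall [h1 h2 h3 h4] u v uv; apply/negP => cvu.
have le := @connect_le D t (fun a b h => proj1 (h2 a b h)) _ _ cvu.
have [le2 heq] := h2 u v uv.
have e : t u = t v by apply: Rle_antisym.
have i2 := heq e.
have vV : v \in gV D by have := allP hall _ uv => /andP [].
have [_ [_ h13]] := h1 v vV.
have [s vs su] : exists2 s, (v, s) \in gA D & connect (arcrel D) s u.
  case/connectP: cvu => [[|s q]] /=.
    by move=> _ euv; subst u; exists v.
  case/andP => hs hp hl; exists s => //; apply/connectP; by exists q.
have o1 : 0 < outdeg D v.
  rewrite /outdeg -has_count; apply/hasP; exists (v, s) => //=.
have [s' [vs' lt]] := h3 v vV o1.
case: (s' =P s) => [es|ne].
  subst s'.
  have le3 := @connect_le D t (fun a b h => proj1 (h2 a b h)) _ _ su.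
  rewrite -e in lt.
  exact: (Rlt_irrefl _ (Rlt_le_trans _ _ _ lt le3)).
have : 1 < outdeg D v.
  apply: (@count2 _ _ (v, s) (v, s')) => //=.
  by apply/eqP => [[]] /esym.
lia.
Qed.

Lemma hgt_uniq (D : graph T) t : endpts D -> HGT_consistent D t -> uniq (gA D).
Proof.
move=> hall [h1 h2 h3 h4]; apply/negPn/negP => /not_uniq_dup [[u r] hc].
have ur : (u, r) \in gA D.
  by rewrite -has_pred1 has_count; lia.
have rV : r \in gV D by have := allP hall _ ur => /andP [].
have [hin _] := h1 r rV.
have hs : size (parents D r) = indeg D r by rewrite size_map size_filter.
have hcu : 1 < count (pred1 u) (parents D r).
  rewrite count_map count_filter.
  apply: leq_trans hc _; apply: sub_count => a /= /eqP -> /=.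
  by rewrite !eqxx.
have : parents D r = [:: u; u].
  move: hs hcu; case: (parents D r) => [|a [|b [|d l]]] //=.
  - move=> _; case: (a == u) => //.
  - by case: (a =P u) => [->|_]; case: (b =P u) => [->|_].
  - move=> hs; lia.
move/(h4 r u u rV); tauto.
Qed.

End G.
Arguments endpts {T}.
Arguments hgt_acyc {T} [D t].
Arguments hgt_uniq {T} [D t].

Theorem mainTheorem8 (T : finType) (X : {set T}) (N : graph T) (p x c y z w : T) :
  network_on X N -> is_binary_network N -> orchard N ->
  (* the arc e with endpoints x and y; p, c are the parent and child of x other than y *)
  (p, x) \in gA N -> (x, c) \in gA N ->
  (((x, y) \in gA N /\ y != c) \/ ((y, x) \in gA N /\ y != p)) ->
  (* the target arc (z,w), not incident to x *)
  (z, w) \in gA N -> z != x -> w != x ->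
  (exists t : T -> R, HGT_consistent (rSPR N p x c z w) t) ->
  network_on X (rSPR N p x c z w).
Proof.
move=> [[hall huniq hacyc hroot htypes] hleaf] _ _ hpx hxc _ hzw zx wx [t ht].
set L := rem (z, w) (rem (x, c) (rem (p, x) (gA N))).
have hxc' : (x, c) \in rem (p, x) (gA N).
  apply: mem_rem_neq => //; apply/eqP => [[ex ec]]; subst p c.
  by have := hacyc _ _ hxc; rewrite connect0.
have hzw' : (z, w) \in rem (x, c) (rem (p, x) (gA N)).
  apply: mem_rem_neq; last apply: mem_rem_neq => //.
  - by apply/eqP => [[ez _]]; rewrite ez eqxx in zx.
  - by apply/eqP => [[_ ew]]; rewrite ew eqxx in wx.
have hin : forall v, indeg (rSPR N p x c z w) v = indeg N v.
  move=> v; rewrite /indeg /rSPR /=.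
  rewrite (count_rem_ _ hpx) (count_rem_ _ hxc') (count_rem_ _ hzw') /=; exact: addnCA.
have hout : forall v, outdeg (rSPR N p x c z w) v = outdeg N v.
  move=> v; rewrite /outdeg /rSPR /=.
  rewrite (count_rem_ _ hpx) (count_rem_ _ hxc') (count_rem_ _ hzw') /=; congr (_ + _); exact: addnCA.
have inV : forall a, a \in gA N -> (a.1 \in gV N) && (a.2 \in gV N).
  by move=> a; apply: (allP hall).
have hend : endpts (rSPR N p x c z w).
  apply/allP => a /=; rewrite /= !in_cons => /orP [/eqP ->|/orP [/eqP ->|/orP [/eqP ->|ha]]] /=.
  - by move: (inV _ hpx) (inV _ hxc) => /= /andP [-> _] /andP [_ ->].
  - by move: (inV _ hpx) (inV _ hzw) => /= /andP [_ ->] /andP [-> _].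
  - by move: (inV _ hpx) (inV _ hzw) => /= /andP [_ ->] /andP [_ ->].
  - by apply: inV; apply: (mem_rem (mem_rem (mem_rem ha))).
split; last first.
  rewrite -hleaf; apply/setP => v; rewrite !inE /is_leaf /= hin hout.
  by case: (v \in gV N).
split.
- exact: hend.
- exact: hgt_uniq hend ht.
- exact: (hgt_acyc hend ht).
- rewrite -hroot; apply: eq_card => v; rewrite !inE /= hin //.
- move=> v vV; have := htypes v vV.
  by rewrite /is_root /is_tree_node /is_retic /is_leaf /= !hin !hout.
Qed.
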